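(* Let $m,n,p \in \mathbb{N}$. The symmetric Kronecker product $\underline{\otimes}$ (defined in the context) on rectangular matrices has the following properties. (a) (Symmetry) $A \,\underline{\otimes}\, B = B \,\underline{\otimes}\, A$ for all $A,B\in\mathbb{R}^{m\times n}$. (b) (Mixed vector product) $(A\,\underline{\otimes}\, B)\operatorname{svec}(\pi(C)) = \operatorname{svec}(\pi(B\,\pi(C)\,A^T))$ for all $A,B\in\mathbb{R}^{m\times n}$, $C\in\mathbb{R}^{n\times n}$. (c) (Transpose) $(A\,\underline{\otimes}\, B)^T = A^T\,\underline{\otimes}\, B^T$ for all $A,B\in\mathbb{R}^{m\times n}$. (d) (Mixed products) For $A,B\in\mathbb{R}^{m\times n}$ and $C,D\in\mathbb{R}^{n\times p}$: $(A\,\underline{\otimes}\, B)(C\,\underline{\otimes}\, D) = \tfrac12\left(AC\,\underline{\otimes}\, BD + AD\,\underline{\otimes}\, BC\right)$; in particular $(A\,\underline{\otimes}\, B)(C\,\underline{\otimes}\, C) = AC\,\underline{\otimes}\, BC$. Also, for $A,B\in\mathbb{R}^{m\times n}$ and $C\in\mathbb{R}^{p\times m}$: $(C\,\underline{\otimes}\, C)(A\,\underline{\otimes}\, B) = CA\,\underline{\otimes}\, CB$. (e) (Shared eigenvectors) Let $A,B\in\mathbb{R}^{n\times n}$ and let $x,y\in\mathbb{C}^n$ be nonzero with $Ax=\lambda_1x$, $Bx=\mu_1x$, $Ay=\lambda_2y$, $By=\mu_2y$. Then $x\,\underline{\otimes}\, y$ is an eigenvector of $A\,\underline{\otimes}\,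 B$ with eigenvalue $\tfrac12(\lambda_1\mu_2+\lambda_2\mu_1)$. (f) (Zero) For $A,B\in\mathbb{R}^{m\times n}$, $A\,\underline{\otimes}\, B = 0$ if and only if $A=0$ or $B=0$.
   Context: For $k \in \mathbb{N}$ let $\underline{k} = k(k+1)/2$, $\mathbb{S}^k$ the real symmetric $k\times k$ matrices, $\langle A,B\rangle_F=\operatorname{tr}(A^TB)$, $\operatorname{vec}$ column-stacking vectorization, $\otimes$ the standard Kronecker product, $e_1,\dots,e_k$ the standard basis of $\mathbb{R}^k$. Enumerate the pairs $(r,c)$, $1\le r\le c\le k$, in the order $(1,1),(1,2),\dots,(1,k),(2,2),\dots,(2,k),\dots,(k,k)$ as $(r(\ell),c(\ell))$, $\ell=1,\dots,\underline{k}$, and set $E_\ell = e_{r(\ell)}e_{r(\ell)}^T$ if $r(\ell)=c(\ell)$, $E_\ell=\frac{\sqrt2}{2}(e_{r(\ell)}e_{c(\ell)}^T+e_{c(\ell)}e_{r(\ell)}^T)$ if $r(\ell)<c(\ell)$. Let $W_k\in\mathbb{R}^{\underline{k}\times k^2}$ have $\ell$-th row $\operatorname{vec}(E_\ell)^T$. For $A,B\in\mathbb{R}^{m\times n}$ (or $\mathbb{C}^{m\times n}$, same formula) the symmetric Kronecker product is $A\,\underline{\otimes}\, B = W_m(A\otimes B)W_n^T\in\mathbb{R}^{\underline{m}\times\underline{n}}$; for column vectors $x,y\in\mathbb{C}^n$ this gives $x\,\underline{\otimes}\, y = W_n(x\otimes y)\in\mathbb{C}^{\underline{n}}$ (as $W_1=1$).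 $\operatorname{svec}:\mathbb{S}^n\to\mathbb{R}^{\underline n}$, $\operatorname{svec}(P) = W_n\operatorname{vec}(P) = (\langle P,E_1\rangle_F,\dots,\langle P,E_{\underline n}\rangle_F)^T$, and $\pi(A) = (A+A^T)/2$ for square $A$. *)

(* Defs.v *)
(* Real field: an arbitrary real closed field R (needed for sqrt 2);
   complex numbers: R[i] from mathcomp-real-closed. *)
From HB Require Import structures.
From mathcomp Require Import all_boot all_order all_algebra.
From mathcomp Require Import complex mxtens.
Set Implicit Arguments. Unset Strict Implicit. Unset Printing Implicit Defensive.
Import Order.TTheory GRing.Theory Num.Theory.
Local Open Scope ring_scope.

Definition tri (k : nat) : nat := (k * k.+1) %/ 2.

(* column-stacking vectorization: vec A has entry A i j at index j*m + i
   (0-based), i.e. vec A = (mxvec A^T)^T since mxvec is row-major. *)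
Definition vec {T : Type} {m n : nat} (A : 'M[T]_(m, n)) : 'cV[T]_(n * m) :=
  (mxvec A^T)^T.

Definition sym_pairs (k : nat) : seq (nat * nat) :=
  [seq (r, c) | r <- iota 0 k, c <- iota r (k - r)].

(* E_l (0-based l) *)
Definition Emat (R : rcfType) (k : nat) (l : nat) : 'M[R]_k :=
  let rc := nth (0%N, 0%N) (sym_pairs k) l in
  if rc.1 == rc.2 then
    \matrix_(a, b) (((a : nat) == rc.1) && ((b : nat) == rc.1))%:R
  else
    (Num.sqrt 2 / 2) *:
      \matrix_(a, b) ((((a : nat) == rc.1) && ((b : nat) == rc.2))%:R
                    + (((a : nat) == rc.2) && ((b : nat) == rc.1))%:R).

Definition Wmat (R : rcfType) (k : nat) : 'M[R]_(tri k, k * k) :=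
  \matrix_(l < tri k) (vec (Emat R k l))^T.

(* standard Kronecker product: tensmx from mathcomp-real-closed (mxtens.v),
   (A *t B) (i1*p+i2) (j1*q+j2) = A i1 j1 * B i2 j2. *)

Definition skron (R : rcfType) (m n : nat) (A B : 'M[R]_(m, n)) : 'M[R]_(tri m, tri n) :=
  Wmat R m *m (tensmx A B) *m (Wmat R n)^T.

Definition WmatC (R : rcfType) (k : nat) : 'M[R[i]]_(tri k, k * k) :=
  map_mx (real_complex R) (Wmat R k).

Definition skronC (R : rcfType) (m n : nat) (A B : 'M[R[i]]_(m, n))
  : 'M[R[i]]_(tri m, tri n) :=
  WmatC R m *m (tensmx A B) *m (WmatC R n)^T.

(* for column vectors x, y in C^n: x (sym-kron) y = W_n (x kron y)  (W_1 = 1) *)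
Definition svkronC (R : rcfType) (n : nat) (x y : 'cV[R[i]]_n) : 'cV[R[i]]_(tri n) :=
  WmatC R n *m (tensmx x y).

Definition svec (R : rcfType) (n : nat) (P : 'M[R]_n) : 'cV[R]_(tri n) :=
  Wmat R n *m vec P.

Definition symp (R : rcfType) (n : nat) (A : 'M[R]_n) : 'M[R]_n :=
  (1 / 2 : R) *: (A + A^T).

(* Main.v *)
Require Import Defs.
From HB Require Import structures.
From mathcomp Require Import all_boot all_order all_algebra.
From mathcomp Require Import complex mxtens.
From mathcomp Require Import ring zify.
Set Implicit Arguments. Unset Strict Implicit. Unset Printing Implicit Defensive.
Import Order.TTheory GRing.Theory Num.Theory.
Local Open Scope ring_scope.

Lemma enum_prodE (T1 T2 : finType) : enum {: T1 * T2} = prod_enum T1 T2.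
Proof. by rewrite enumT unlock. Qed.

Lemma nth_allpairs_pair (T1 T2 : Type) (x0 : T1) (y0 : T2) (s1 : seq T1) (s2 : seq T2) i j :
  (i < size s1)%N -> (j < size s2)%N ->
  nth (x0, y0) [seq (a, b) | a <- s1, b <- s2] (i * size s2 + j) = (nth x0 s1 i, nth y0 s2 j).
Proof.
elim: s1 i => [//|a s1 IH] [|i] /= Hi Hj.
  by rewrite nth_cat size_map Hj (nth_map y0).
rewrite nth_cat size_map mulSn -addnA ltnNge leq_addr /= addKn IH //.
Qed.

Lemma mxvec_indexE m n (i : 'I_m) (j : 'I_n) : mxvec_index i j = mxtens_index (i, j).
Proof.
apply: val_inj => /=.
have Hs : size (enum {: 'I_m * 'I_n}) = (m * n)%N by rewrite -cardE card_prod !card_ord.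
have H1 := nth_enum_rank (i, j) (i, j).
have H2 : nth (i, j) (enum {: 'I_m * 'I_n}) (i * n + j) = (i, j).
  rewrite enum_prodE /prod_enum.
  have := @nth_allpairs_pair _ _ i j (enum 'I_m) (enum 'I_n) i j.
  by rewrite !size_enum_ord !nth_ord_enum => ->.
apply/eqP; rewrite -(nth_uniq (i, j) _ _ (enum_uniq {: 'I_m * 'I_n})) ?Hs.
- by rewrite H1 H2.
- by rewrite -Hs -cardE ltn_ord.
- by have := mxtens_index_proof (i, j).
Qed.

Lemma vecE (T : Type) m n (X : 'M[T]_(m, n)) i j (z : 'I_1) :
  vec X (mxtens_index (j, i)) z = X i j.
Proof. by rewrite /vec -mxvec_indexE mxE [z]ord1 mxvecE mxE. Qed.

Lemma vec_inj (T : Type) m n (X Y : 'M[T]_(m, n)) : vec X = vec Y -> X = Y.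
Proof.
move=> H; apply/matrixP => i j.
by rewrite -(vecE X i j 0) -(vecE Y i j 0) H.
Qed.

Lemma vecD (F : pzRingType) m n (X Y : 'M[F]_(m, n)) : vec (X + Y) = vec X + vec Y.
Proof.
apply/matrixP => k z; case: (mxtens_indexP k) => j i.
by rewrite [RHS]mxE !vecE ?mxE.
Qed.

Lemma vecZ (F : pzRingType) m n a (X : 'M[F]_(m, n)) : vec (a *: X) = a *: vec X.
Proof.
apply/matrixP => k z; case: (mxtens_indexP k) => j i.
by rewrite [RHS]mxE !vecE ?mxE.
Qed.

Lemma vec0 (F : pzRingType) m n : vec (0 : 'M[F]_(m, n)) = 0.
Proof.
apply/matrixP => k z; case: (mxtens_indexP k) => j i.
by rewrite [RHS]mxE !vecE ?mxE.
Qed.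

Lemma sum_tens (F : pzRingType) m n (f : 'I_(m * n) -> F) :
  \sum_(a < m * n) f a = \sum_(i < m) \sum_(j < n) f (mxtens_index (i, j)).
Proof.
rewrite pair_big /= (reindex (@mxtens_index m n)) /=.
  by apply: eq_bigr => -[i j].
by exists (@mxtens_unindex m n) => x _; [apply: mxtens_indexK | apply: mxtens_unindexK].
Qed.

Lemma tens_vec (F : comPzRingType) m n p q (A : 'M[F]_(m, n)) (B : 'M[F]_(p, q)) (X : 'M[F]_(q, n)) :
  tensmx A B *m vec X = vec (B *m X *m A^T).
Proof.
apply/matrixP => k z; case: (mxtens_indexP k) => i1 i2.
rewrite vecE mxE sum_tens mxE.
apply: eq_bigr => a _; rewrite !mxE mulr_suml; apply: eq_bigr => b _.
by rewrite tensmxE vecE [RHS]mulrC mulrA.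
Qed.

Lemma mx_eq_on (F : pzRingType) a k (M N : 'M[F]_(a, k)) :
  (forall u : 'cV_k, M *m u = N *m u) -> M = N.
Proof.
move=> H; apply/matrixP => i j.
have := congr1 (fun v : 'cV_a => v i 0) (H (delta_mx j 0)).
by rewrite -!colE !mxE.
Qed.
Lemma triS k : tri k.+1 = (k.+1 + tri k)%N.
Proof. rewrite /tri. have -> : (k.+1 * k.+2 = k.+1 * 2 + k * k.+1)%N by ring.
by rewrite divnMDl. Qed.

Lemma size_sym_pairs k : size (sym_pairs k) = tri k.
Proof.
rewrite /sym_pairs size_allpairs_dep.
suff H : forall len a, sumn [seq size (iota r (a + len - r)) | r <- iota a len] = tri len.
  by have := H k 0%N; rewrite add0n.
elim=> [|len IH] a; first by [].
rewrite /= size_iota addnS subSn ?leq_addr // addKn triS.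
by rewrite -(IH a.+1) addSn.
Qed.

Lemma mem_sym_pairs k r c : ((r, c) \in sym_pairs k) = (r <= c < k)%N.
Proof.
apply/allpairsPdep/idP => [[x [y [Hx Hy [-> ->]]]]|/andP[Hrc Hck]].
  move: Hx Hy; rewrite !mem_iota add0n => /= Hx /andP[-> /=].
  by rewrite subnKC // ltnW.
exists r, c; split => //.
  by rewrite mem_iota /= (leq_ltn_trans Hrc Hck).
by rewrite mem_iota Hrc subnKC // ltnW // (leq_ltn_trans Hrc Hck).
Qed.

Lemma uniq_sym_pairs k : uniq (sym_pairs k).
Proof.
apply: allpairs_uniq_dep.
- exact: iota_uniq.
- by move=> x _; exact: iota_uniq.
- by move=> [x1 y1] [x2 y2] _ _ /= [-> ->].
Qed.
Definition Eg (F : numFieldType) (s : F) (k : nat) (l : nat) : 'M[F]_k :=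
  let rc := nth (0%N, 0%N) (sym_pairs k) l in
  if rc.1 == rc.2 then
    \matrix_(a, b) (((a : nat) == rc.1) && ((b : nat) == rc.1))%:R
  else
    s *:
      \matrix_(a, b) ((((a : nat) == rc.1) && ((b : nat) == rc.2))%:R
                    + (((a : nat) == rc.2) && ((b : nat) == rc.1))%:R).

Lemma Emat_Eg (R : rcfType) k l : Emat R k l = Eg (Num.sqrt 2 / 2 : R) k l.
Proof. by []. Qed.

Definition pr k l := nth (0%N, 0%N) (sym_pairs k) l.

Lemma EgE (F : numFieldType) (s : F) k l (i j : 'I_k) :
  Eg s k l i j = if (pr k l).1 == (pr k l).2 then
     (((i : nat) == (pr k l).1) && ((j : nat) == (pr k l).1))%:R
  else s * ((((i : nat) == (pr k l).1) && ((j : nat) == (pr k l).2))%:R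
                    + (((i : nat) == (pr k l).2) && ((j : nat) == (pr k l).1))%:R).
Proof. by rewrite /Eg /pr; case: ifP => _; rewrite !mxE. Qed.

Lemma Eg_sym (F : numFieldType) (s : F) k l (i j : 'I_k) : Eg s k l i j = Eg s k l j i.
Proof.
rewrite !EgE; case: ifP => [/eqP ->|_]; first by rewrite andbC.
rewrite [X in s * X = _]addrC; congr (_ * (_%:R + _%:R)); by rewrite andbC.
Qed.

Lemma pr_mem k (l : 'I_(tri k)) : pr k l \in sym_pairs k.
Proof. by rewrite /pr mem_nth // size_sym_pairs. Qed.

Lemma l0_proof k (i j : 'I_k) : (index (minn i j, maxn i j) (sym_pairs k) < tri k)%N.
Proof.
rewrite -size_sym_pairs index_mem mem_sym_pairs.
have := ltn_ord i; have := ltn_ord j; move=> Hj Hi.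
apply/andP; split; lia.
Qed.

Definition l0 k (i j : 'I_k) : 'I_(tri k) := Ordinal (l0_proof i j).

Lemma pr_l0 k (i j : 'I_k) : pr k (l0 i j) = (minn i j, maxn i j).
Proof.
rewrite /pr /= nth_index // mem_sym_pairs.
have := ltn_ord i; have := ltn_ord j; move=> Hj Hi.
apply/andP; split; lia.
Qed.

Lemma Eg_nz (F : numFieldType) (s : F) k (l : 'I_(tri k)) (i j : 'I_k) :
  Eg s k l i j != 0 -> l = l0 i j.
Proof.
move=> H.
suff Hp : pr k l = (minn i j, maxn i j).
  apply: val_inj => /=; rewrite -Hp /pr index_uniq //.
    by rewrite size_sym_pairs.
  exact: uniq_sym_pairs.
move: H (pr_mem l); rewrite EgE; case: (pr k l) => r c /=.
rewrite mem_sym_pairs => + /andP[Hrc _].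
case: ifP => [/eqP <-|_].
  case: andP => [[/eqP -> /eqP ->] _|]; last by rewrite eqxx.
  by rewrite minnn maxnn.
case: andP => [[/eqP -> /eqP ->] _|_].
  by rewrite (minn_idPl Hrc) (maxn_idPr Hrc).
case: andP => [[/eqP -> /eqP ->] _|_].
  by rewrite (minn_idPr Hrc) (maxn_idPl Hrc).
by rewrite addr0 mulr0 eqxx.
Qed.

Lemma Eg_l0 (F : numFieldType) (s : F) k (i j a b : 'I_k) :
  Eg s k (l0 i j) a b = if i == j then ((a == i) && (b == i))%:R
     else s * (((a == i) && (b == j))%:R + ((a == j) && (b == i))%:R).
Proof.
rewrite EgE pr_l0 /=.
case: (leqP i j) => Hij.
  by [].
have -> : (nat_of_ord j == nat_of_ord i) = false by apply/eqP; lia.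
have -> : (i == j) = false by apply/eqP => E; move: Hij; rewrite E; lia.
by rewrite addrC.
Qed.

Lemma sum2_delta (F : numFieldType) k (p q : 'I_k) (X : 'M[F]_k) :
  \sum_a \sum_b ((a == p) && (b == q))%:R * X a b = X p q.
Proof.
rewrite (bigD1 p) //= [X in _ + X = _]big1 => [|a Ha]; last first.
  by rewrite big1 // => b _; rewrite (negbTE Ha) mul0r.
rewrite addr0 (bigD1 q) //= big1 => [|b Hb]; last by rewrite (negbTE Hb) andbF mul0r.
by rewrite !eqxx mul1r addr0.
Qed.

Lemma Eg_expand (F : numFieldType) (s : F) (hs : s * s = 2^-1) k (X : 'M[F]_k) :
  X^T = X ->
  \sum_(l < tri k) (\sum_a \sum_b Eg s k l a b * X a b) *: Eg s k l = X.
Proof.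
move=> HX; apply/matrixP => i j.
rewrite summxE (bigD1 (l0 i j)) // [X in _ + X = _]big1 => [|l Hl]; last first.
  rewrite mxE; suff -> : Eg s k l i j = 0 by rewrite mulr0.
  by apply/eqP; apply: contraNT Hl => /Eg_nz ->.
rewrite mxE addr0.
under eq_bigr do under eq_bigr do rewrite Eg_l0.
rewrite Eg_l0; case: eqP => [<-|Hne].
  by rewrite sum2_delta !eqxx mulr1.
have -> : \sum_a \sum_b s * (((a == i) && (b == j))%:R + ((a == j) && (b == i))%:R) * X a b
   = s * (\sum_a \sum_b ((a == i) && (b == j))%:R * X a b
          + \sum_a \sum_b ((a == j) && (b == i))%:R * X a b).
  rewrite -big_split mulr_sumr; apply: eq_bigr => a _.
  rewrite -big_split mulr_sumr; apply: eq_bigr => b _.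
  by rewrite /= -mulrDl mulrA.
rewrite !sum2_delta !eqxx /=.
have -> : X j i = X i j by rewrite -[in RHS]HX mxE.
rewrite addr0 mulr1.
have -> : s * (X i j + X i j) * s = (s * s) * (X i j *+ 2) by rewrite mulr2n; ring.
have H2 : (2 : F) != 0 by rewrite pnatr_eq0.
by rewrite hs -(mulr_natl (X i j) 2) mulrA mulVf // mul1r.
Qed.
Definition Wg (F : numFieldType) (s : F) k : 'M[F]_(tri k, k * k) :=
  \matrix_(l < tri k) (vec (Eg s k l))^T.

Definition ip (F : numFieldType) k (E X : 'M[F]_k) := \sum_a \sum_b E a b * X a b.

Definition psym (F : numFieldType) k (X : 'M[F]_k) := (1 / 2 : F) *: (X + X^T).

Lemma WgE (F : numFieldType) (s : F) k (l : 'I_(tri k)) (i j : 'I_k) :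
  Wg s k l (mxtens_index (j, i)) = Eg s k l i j.
Proof. by rewrite /Wg mxE mxE vecE. Qed.

Lemma Wg_vec (F : numFieldType) (s : F) k (X : 'M[F]_k) :
  Wg s k *m vec X = \col_l ip (Eg s k l) X.
Proof.
apply/matrixP => l z; rewrite !mxE sum_tens exchange_big /=.
apply: eq_bigr => i _; apply: eq_bigr => j _.
by rewrite WgE vecE.
Qed.

Definition Ysum (F : numFieldType) (s : F) k (u : 'cV[F]_(tri k)) : 'M[F]_k :=
  \sum_l u l 0 *: Eg s k l.

Lemma WgT_mul (F : numFieldType) (s : F) k (u : 'cV[F]_(tri k)) :
  (Wg s k)^T *m u = vec (Ysum s u).
Proof.
apply/matrixP => c z; case: (mxtens_indexP c) => j i.
rewrite vecE !mxE summxE; apply: eq_bigr => l _.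
by rewrite mxE WgE mxE [z]ord1 mulrC.
Qed.

Lemma Ysum_sym (F : numFieldType) (s : F) k (u : 'cV[F]_(tri k)) : (Ysum s u)^T = Ysum s u.
Proof.
apply/matrixP => i j; rewrite !mxE !summxE; apply: eq_bigr => l _.
by rewrite !mxE Eg_sym.
Qed.

Lemma ip_tr (F : numFieldType) (s : F) k l (X : 'M[F]_k) : ip (Eg s k l) X^T = ip (Eg s k l) X.
Proof.
rewrite /ip exchange_big /=; apply: eq_bigr => i _; apply: eq_bigr => j _.
by rewrite mxE Eg_sym.
Qed.

Lemma Wg_vecT (F : numFieldType) (s : F) k (X : 'M[F]_k) : Wg s k *m vec X^T = Wg s k *m vec X.
Proof. by rewrite !Wg_vec; apply/matrixP => l z; rewrite !mxE ip_tr. Qed.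

Lemma half_dbl (F : numFieldType) (v : F) : (1 / 2 : F) * (v + v) = v.
Proof.
have H2 : (2 : F) != 0 by rewrite pnatr_eq0.
by rewrite -mulr2n -(mulr_natl v 2) mulrA mul1r mulVf // mul1r.
Qed.

Lemma Wg_psym (F : numFieldType) (s : F) k (X : 'M[F]_k) : Wg s k *m vec (psym X) = Wg s k *m vec X.
Proof.
rewrite /psym vecZ vecD -scalemxAr mulmxDr Wg_vecT.
apply/matrixP => i j; rewrite !mxE.
by rewrite half_dbl.
Qed.

Lemma psym_sym (F : numFieldType) k (X : 'M[F]_k) : (psym X)^T = psym X.
Proof. by rewrite /psym linearZ /= linearD /= trmxK addrC. Qed.

Lemma WTW (F : numFieldType) (s : F) (hs : s * s = 2^-1) k (X : 'M[F]_k) :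
  (Wg s k)^T *m (Wg s k *m vec X) = vec (psym X).
Proof.
rewrite -Wg_psym Wg_vec WgT_mul; congr vec.
rewrite -[RHS](Eg_expand hs (psym_sym X)); apply: eq_bigr => l _.
by rewrite mxE.
Qed.

Definition skg (F : numFieldType) (s : F) m n (A B : 'M[F]_(m, n)) : 'M[F]_(tri m, tri n) :=
  Wg s m *m tensmx A B *m (Wg s n)^T.

Lemma skg_u (F : numFieldType) (s : F) m n (A B : 'M[F]_(m, n)) (u : 'cV[F]_(tri n)) :
  skg s A B *m u = Wg s m *m vec (B *m Ysum s u *m A^T).
Proof. by rewrite /skg -2!mulmxA WgT_mul tens_vec. Qed.

Lemma skg_sym (F : numFieldType) (s : F) m n (A B : 'M[F]_(m, n)) : skg s A B = skg s B A.
Proof.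
apply: mx_eq_on => u; rewrite !skg_u -Wg_vecT.
by rewrite !trmx_mul trmxK Ysum_sym mulmxA.
Qed.

Lemma skg_tr (F : numFieldType) (s : F) m n (A B : 'M[F]_(m, n)) : (skg s A B)^T = skg s A^T B^T.
Proof. by rewrite /skg !trmx_mul trmxK trmx_tens mulmxA. Qed.

Lemma skg_mul (F : numFieldType) (s : F) (hs : s * s = 2^-1) m n p
  (A B : 'M[F]_(m, n)) (C D : 'M[F]_(n, p)) :
  skg s A B *m skg s C D
  = (1 / 2 : F) *: (skg s (A *m C) (B *m D) + skg s (A *m D) (B *m C)).
Proof.
apply: mx_eq_on => u.
rewrite -mulmxA [skg s C D *m u]skg_u.
rewrite {1}/skg -!mulmxA WTW // tens_vec.
rewrite -scalemxAl mulmxDl !skg_u.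
set Y := Ysum s u.
have HY : Y^T = Y by exact: Ysum_sym.
rewrite /psym -scalemxAr -scalemxAl vecZ -scalemxAr; congr (_ *: _).
rewrite mulmxDr mulmxDl vecD mulmxDr; congr (_ + _); congr (_ *m vec _).
  by rewrite !trmx_mul !mulmxA.
by rewrite !trmx_mul HY trmxK !mulmxA.
Qed.

Lemma psym_id (F : numFieldType) k (X : 'M[F]_k) : X^T = X -> psym X = X.
Proof. by move=> HX; rewrite /psym HX; apply/matrixP => i j; rewrite !mxE half_dbl. Qed.

Lemma skg_W (F : numFieldType) (s : F) (hs : s * s = 2^-1) m n (A B : 'M[F]_(m, n)) (Z : 'M[F]_n) :
  skg s A B *m (Wg s n *m vec Z) = Wg s m *m vec (B *m psym Z *m A^T).
Proof. by rewrite /skg -!mulmxA WTW // tens_vec mulmxA. Qed.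

Lemma skg_b (F : numFieldType) (s : F) (hs : s * s = 2^-1) m n (A B : 'M[F]_(m, n)) (C : 'M[F]_n) :
  skg s A B *m (Wg s n *m vec (psym C)) = Wg s m *m vec (psym (B *m psym C *m A^T)).
Proof. by rewrite skg_W // Wg_psym psym_id // psym_sym. Qed.

Lemma outer_zero (F : numFieldType) m (a b : 'cV[F]_m) :
  a *m b^T + b *m a^T = 0 -> a = 0 \/ b = 0.
Proof.
move=> H; case: (boolP (a == 0)) => [/eqP ->|Ha]; [by left | right].
have [i Hi] : exists i, a i 0 != 0.
  apply/existsP; apply: contraR Ha => /existsPn Hn.
  apply/eqP/matrixP => x y; rewrite [y]ord1 mxE.
  by move: (Hn x); rewrite negbK => /eqP.
have E : forall p q, a p 0 * b q 0 + b p 0 * a q 0 = 0.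
  move=> p q; have := congr1 (fun M : 'M_m => M p q) H.
  by rewrite !mxE !big_ord1 !mxE.
have Hbi : b i 0 = 0.
  have := E i i; rewrite [b i 0 * _]mulrC -mulr2n => /eqP.
  by rewrite mulrn_eq0 /= mulf_eq0 (negbTE Hi) /= => /eqP.
apply/matrixP => j z; rewrite [z]ord1 mxE.
have := E j i; rewrite Hbi mulr0 add0r => /eqP.
by rewrite mulf_eq0 (negbTE Hi) orbF => /eqP.
Qed.

Lemma skg_zero (F : numFieldType) (s : F) (hs : s * s = 2^-1) m n (A B : 'M[F]_(m, n)) :
  skg s A B = 0 <-> A = 0 \/ B = 0.
Proof.
split; last first.
  by case=> ->; rewrite /skg ?tens0mx ?tensmx0 mulmx0 mul0mx.
move=> H.
have H1 : forall Y : 'M[F]_n, Y^T = Y -> psym (B *m Y *m A^T) = 0.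
  move=> Y HY; have := congr1 (fun M => M *m (Wg s n *m vec Y)) H.
  rewrite /= skg_W // psym_id // mul0mx => /(congr1 (fun v => (Wg s m)^T *m v)).
  rewrite WTW // mulmx0 -(vec0 F m m); exact: vec_inj.
have H2 : forall v : 'cV[F]_n, A *m v = 0 \/ B *m v = 0.
  move=> v; have := H1 (v *m v^T); rewrite trmx_mul trmxK => /(_ erefl).
  rewrite /psym => /eqP; rewrite scaler_eq0 div1r invr_eq0 pnatr_eq0 /= => /eqP.
  have -> : B *m (v *m v^T) *m A^T = (B *m v) *m (A *m v)^T by rewrite trmx_mul !mulmxA.
  rewrite [X in _ + X = _]trmx_mul trmxK => /outer_zero [] ->; by [right | left].
case: (boolP (A == 0)) => [/eqP ->|HA]; [by left | right].
apply/eqP; apply: contraT => HB; exfalso.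
have colnz : forall M : 'M[F]_(m, n), M != 0 -> exists j : 'I_n, M *m (delta_mx j 0 : 'cV[F]_n) != 0.
  move=> M HM; apply/existsP; apply: contraR HM => /existsPn Hn.
  apply/eqP/matrixP => x y.
  move: (Hn y); rewrite negbK -colE => /eqP /(congr1 (fun v : 'cV_m => v x 0)).
  by rewrite !mxE.
have [j1 Hj1] := colnz A HA; have [j2 Hj2] := colnz B HB.
set v1 := delta_mx j1 0 : 'cV[F]_n; set v2 := delta_mx j2 0 : 'cV[F]_n.
have Bv1 : B *m v1 = 0 by case: (H2 v1) => // E; rewrite E eqxx in Hj1.
have Av2 : A *m v2 = 0 by case: (H2 v2) => // E; rewrite E eqxx in Hj2.
case: (H2 (v1 + v2)); rewrite mulmxDr.
  by rewrite Av2 addr0 => E; rewrite E eqxx in Hj1.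
by rewrite Bv1 add0r => E; rewrite E eqxx in Hj2.
Qed.

Lemma tens_cv (F : numFieldType) n (x y : 'cV[F]_n) : tensmx x y = vec (y *m x^T).
Proof.
apply/matrixP => c z; case: (mxtens_indexP c) => i j.
have -> : z = mxtens_index (ord0, ord0) by apply: val_inj; case: z => -[].
by rewrite tensmxE vecE !mxE big_ord1 !mxE mulrC.
Qed.

Lemma skg_eig (F : numFieldType) (s : F) (hs : s * s = 2^-1) n (A B : 'M[F]_n)
  (x y : 'cV[F]_n) (l1 m1 l2 m2 : F) :
  x != 0 -> y != 0 ->
  A *m x = l1 *: x -> B *m x = m1 *: x -> A *m y = l2 *: y -> B *m y = m2 *: y ->
  Wg s n *m tensmx x y != 0 /\
  skg s A B *m (Wg s n *m tensmx x y) = ((1 / 2) * (l1 * m2 + l2 * m1)) *: (Wg s n *m tensmx x y).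
Proof.
move=> Hx Hy Ax Bx Ay By; rewrite tens_cv; split.
  apply/eqP => /(congr1 (fun v => (Wg s n)^T *m v)); rewrite WTW // mulmx0 -(vec0 F n n).
  move=> /vec_inj /eqP; rewrite /psym scaler_eq0 div1r invr_eq0 pnatr_eq0 /= trmx_mul trmxK.
  move=> /eqP /outer_zero [] E; [by rewrite E eqxx in Hy | by rewrite E eqxx in Hx].
rewrite skg_W //.
have -> : B *m psym (y *m x^T) *m A^T
    = (1 / 2) *: ((m2 * l1) *: (y *m x^T) + (m1 * l2) *: (y *m x^T)^T).
  rewrite /psym -scalemxAr -scalemxAl; congr (_ *: _).
  rewrite mulmxDr mulmxDl trmx_mul trmxK !mulmxA.
  rewrite -[B *m y *m x^T *m A^T]mulmxA -[B *m x *m y^T *m A^T]mulmxA -!trmx_mul.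
  rewrite By Bx Ax Ay !linearZ /= -!scalemxAl !scalerA.
  by rewrite [l1 * m2]mulrC [l2 * m1]mulrC.
rewrite vecZ vecD !vecZ -!scalemxAr mulmxDr -!scalemxAr Wg_vecT -scalerDl scalerA.
by rewrite [m2 * l1]mulrC [m1 * l2]mulrC.
Qed.
Lemma hsR (R : rcfType) : (Num.sqrt 2 / 2 : R) * (Num.sqrt 2 / 2) = 2^-1.
Proof.
have H2 : (2 : R) != 0 by rewrite pnatr_eq0.
rewrite mulrACA -expr2 sqr_sqrtr ?ler0n // mulrA mulfV // mul1r. reflexivity.
Qed.

Lemma hsC (R : rcfType) : (real_complex R (Num.sqrt 2 / 2 : R)) * (real_complex R (Num.sqrt 2 / 2 : R)) = 2^-1.
Proof. by rewrite -rmorphM hsR fmorphV rmorph_nat. Qed.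

Lemma WmatC_Wg (R : rcfType) k : WmatC R k = Wg (real_complex R (Num.sqrt 2 / 2 : R)) k.
Proof.
apply/matrixP => l c; case: (mxtens_indexP c) => j i.
rewrite /WmatC mxE !WgE.
rewrite !EgE; case: ifP => _; first by rewrite rmorph_nat.
by rewrite rmorphM rmorphD !rmorph_nat.
Qed.

Lemma half_dblM (F : numFieldType) a b (M : 'M[F]_(a, b)) : (1 / 2 : F) *: (M + M) = M.
Proof. by apply/matrixP => i j; rewrite !mxE half_dbl. Qed.

Theorem proposition3 (R : rcfType) (m n p : nat) :
  (* (a) symmetry *)
  (forall A B : 'M[R]_(m, n), skron A B = skron B A) /\
  (* (b) mixed vector product *)
  (forall (A B : 'M[R]_(m, n)) (C : 'M[R]_n),
      skron A B *m svec (symp C) = svec (symp (B *m symp C *m A^T))) /\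
  (* (c) transpose *)
  (forall A B : 'M[R]_(m, n), (skron A B)^T = skron A^T B^T) /\
  (* (d) mixed products *)
  (forall (A B : 'M[R]_(m, n)) (C D : 'M[R]_(n, p)),
      skron A B *m skron C D
      = (1 / 2 : R) *: (skron (A *m C) (B *m D) + skron (A *m D) (B *m C))) /\
  (forall (A B : 'M[R]_(m, n)) (C : 'M[R]_(n, p)),
      skron A B *m skron C C = skron (A *m C) (B *m C)) /\
  (forall (A B : 'M[R]_(m, n)) (C : 'M[R]_(p, m)),
      skron C C *m skron A B = skron (C *m A) (C *m B)) /\
  (* (e) shared eigenvectors *)
  (forall (A B : 'M[R]_n) (x y : 'cV[R[i]]_n) (l1 m1 l2 m2 : R[i]),
      x != 0 -> y != 0 ->
      map_mx (real_complex R) A *m x = l1 *: x ->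
      map_mx (real_complex R) B *m x = m1 *: x ->
      map_mx (real_complex R) A *m y = l2 *: y ->
      map_mx (real_complex R) B *m y = m2 *: y ->
      svkronC x y != 0 /\
      skronC (map_mx (real_complex R) A) (map_mx (real_complex R) B) *m svkronC x y
      = ((1 / 2) * (l1 * m2 + l2 * m1)) *: svkronC x y) /\
  (* (f) zero *)
  (forall A B : 'M[R]_(m, n), skron A B = 0 <-> A = 0 \/ B = 0).
Proof.
have hs := hsR R.
set s := (Num.sqrt 2 / 2 : R) in hs.
have hc := hsC R.
split; first by move=> A B; exact: (skg_sym s A B).
split; first by move=> A B C; exact: (skg_b hs A B C).
split; first by move=> A B; exact: (skg_tr s A B).
split; first by move=> A B C D; exact: (skg_mul hs A B C D).
split.
  move=> A B C; change (skg s A B *m skg s C C = skg s (A *m C) (B *m C)).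
  by rewrite (skg_mul hs) half_dblM.
split.
  move=> A B C; change (skg s C C *m skg s A B = skg s (C *m A) (C *m B)).
  by rewrite (skg_mul hs) (skg_sym s (C *m B)) half_dblM.
split; last by move=> A B; exact: (skg_zero hs A B).
move=> A B x y l1 m1 l2 m2 Hx Hy H1 H2 H3 H4.
rewrite /svkronC /skronC WmatC_Wg.
exact: (skg_eig hc Hx Hy H1 H2 H3 H4).
Qed.
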